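(* Let $a,b>0$ and $2\le k<m\le n-1$ be integers with $a^m\neq b^k$. Let $x_1,\dots,x_n$ and $y_1,\dots,y_n$ be positive real numbers such that $$x_I+y_I=2a\quad\text{and}\quad x_J+y_J=2b$$ whenever $I,J\subset\{1,\dots,n\}$, $|I|=k$ and $|J|=m$. Then there is a constant $c>0$ such that $x_\iota/y_\iota=c$ for $\iota=1,\dots,n$.
   Context: For real numbers $x_1,\dots,x_n$ and $I\subset\{1,\dots,n\}$, $x_I:=\prod_{\iota\in I}x_\iota$ (with $x_\emptyset=1$); $|I|$ is the cardinality of $I$. *)

(* Defs.v *)
From mathcomp Require Import all_boot all_order all_algebra.
From mathcomp Require Import reals.
Set Implicit Arguments. Unset Strict Implicit. Unset Printing Implicit Defensive.
Import Order.TTheory GRing.Theory Num.Theory.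
Local Open Scope ring_scope.

Definition prodI (R : realType) (n : nat) (x : 'I_n -> R) (I : {set 'I_n}) : R :=
  \prod_(i in I) x i.

(* Main.v *)
Require Import Defs.
From mathcomp Require Import all_boot all_order all_algebra.
From mathcomp Require Import reals.
From mathcomp Require Import ring lra zify.
Import Order.TTheory GRing.Theory Num.Theory.
Local Open Scope ring_scope.

Lemma exists_sub (n t : nat) (A : {set 'I_n}) :
  (t <= #|A|)%N -> exists S : {set 'I_n}, S \subset A /\ #|S| = t.
Proof.
move=> ht; exists [set z in take t (enum A)]; split.
  by apply/subsetP => z; rewrite inE => /mem_take; rewrite mem_enum.
rewrite cardsE; have /card_uniqP -> : uniq (take t (enum A)) by rewrite take_uniq // enum_uniq.
by rewrite size_takel // -cardE.
Qed.

Lemma card_compl_le (n : nat) (B : {set 'I_n}) : (n - #|B| <= #|~: B|)%N.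
Proof. have := cardsC B; rewrite card_ord; lia. Qed.

Lemma cardU1_le (T : finType) (a : T) (A : {set T}) : (#|a |: A| <= #|A|.+1)%N.
Proof. by rewrite cardsU1; case: (a \notin A). Qed.

Lemma prodIU1 (R : realType) n (x : 'I_n -> R) (l : 'I_n) (S : {set 'I_n}) :
  l \notin S -> prodI x (l |: S) = x l * prodI x S.
Proof. by move=> h; rewrite /prodI big_setU1. Qed.

Lemma cardU1_notin (n : nat) (l : 'I_n) (S : {set 'I_n}) : l \notin S -> #|l |: S| = #|S|.+1.
Proof. by move=> h; rewrite cardsU1 h. Qed.

Lemma prodI_gt0 (R : realType) n (x : 'I_n -> R) (S : {set 'I_n}) :
  (forall i, 0 < x i) -> 0 < prodI x S.
Proof. by move=> h; rewrite /prodI; apply: prodr_gt0 => i _. Qed.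

Arguments card_compl_le {n}.
Arguments cardU1_le {T}.
Arguments prodI_gt0 {R n}.
Arguments exists_sub {n}.
Arguments prodIU1 {R n}.
Arguments cardU1_notin {n}.

Lemma avoid (n : nat) (B : {set 'I_n}) : (#|B| < n)%N -> exists l : 'I_n, l \notin B.
Proof.
move=> h; have : (0 < #|~: B|)%N by have := card_compl_le B; lia.
by case/card_gt0P => l; rewrite inE => hl; exists l.
Qed.

Lemma lemL (R : realType) (n k : nat) (x y : 'I_n -> R) (c : R) :
  (2 <= k)%N -> (k + 2 <= n)%N ->
  (forall i, 0 < x i) -> (forall i, 0 < y i) ->
  (forall I : {set 'I_n}, #|I| = k -> prodI x I + prodI y I = c) ->
  forall i j l l', l \notin [set i; j] -> l' \notin [set i; j] ->
  x i * y j != x j * y i -> x l = x l' /\ y l = y l'.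
Proof.
move=> hk hn hx hy hI i j l l' hl hl' hd.
have [->|nll] := eqVneq l l'; first by [].
set B := i |: (j |: (l |: [set l'])).
have cB : (#|B| <= 4)%N.
  have h1 := cardU1_le i (j |: (l |: [set l'])).
  have h2 := cardU1_le j (l |: [set l']).
  have h3 := cardU1_le l [set l'].
  rewrite cards1 in h3; rewrite /B; lia.
have [S' [sS cS]] : exists S : {set 'I_n}, S \subset ~: B /\ #|S| = (k - 2)%N.
  apply: exists_sub; apply: leq_trans (card_compl_le B).
  apply: (@leq_trans (n - 4)); [lia | exact: leq_sub2l].
have nin z : z \in B -> z \notin S'.
  by move=> zB; apply/negP => /(subsetP sS); rewrite inE zB.
have iS : i \notin S' by apply: nin; rewrite /B !inE eqxx.
have jS : j \notin S' by apply: nin; rewrite /B !inE eqxx !orbT.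
have lS : l \notin S' by apply: nin; rewrite /B !inE eqxx !orbT.
have l'S : l' \notin S' by apply: nin; rewrite /B !inE eqxx !orbT.
move: hl hl'; rewrite !inE !negb_or => /andP[li lj] /andP[l'i l'j].
have il1 : i \notin l |: S' by rewrite !inE negb_or eq_sym li.
have jl1 : j \notin l |: S' by rewrite !inE negb_or eq_sym lj.
have il2 : i \notin l' |: S' by rewrite !inE negb_or eq_sym l'i.
have jl2 : j \notin l' |: S' by rewrite !inE negb_or eq_sym l'j.
have ck (z w : 'I_n) : z \notin w |: S' -> w \notin S' -> #|z |: (w |: S')| = k.
  by move=> h1 h2; rewrite cardU1_notin // cardU1_notin // cS -addn2 subnK.
have e1 := hI _ (ck _ _ il1 lS); have e2 := hI _ (ck _ _ jl1 lS).
have e3 := hI _ (ck _ _ il2 l'S); have e4 := hI _ (ck _ _ jl2 l'S).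
rewrite !prodIU1 // in e1 e2 e3 e4.
have P0 := prodI_gt0 x S' hx; have Q0 := prodI_gt0 y S' hy.
set P := prodI x S' in e1 e2 e3 e4 P0; set Q := prodI y S' in e1 e2 e3 e4 Q0.
set u := P * (x l - x l'); set v := Q * (y l - y l').
have f1 : x i * u + y i * v = 0.
  have -> : x i * u + y i * v = (x i * (x l * P) + y i * (y l * Q)) - (x i * (x l' * P) + y i * (y l' * Q)) by rewrite /u /v; ring.
  by rewrite e1 e3 subrr.
have f2 : x j * u + y j * v = 0.
  have -> : x j * u + y j * v = (x j * (x l * P) + y j * (y l * Q)) - (x j * (x l' * P) + y j * (y l' * Q)) by rewrite /u /v; ring.
  by rewrite e2 e4 subrr.
have hu : u * (x i * y j - x j * y i) = 0.
  have -> : u * (x i * y j - x j * y i) = y j * (x i * u + y i * v) - y i * (x j * u + y j * v) by ring.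
  by rewrite f1 f2; ring.
have hv : v * (x i * y j - x j * y i) = 0.
  have -> : v * (x i * y j - x j * y i) = x i * (x j * u + y j * v) - x j * (x i * u + y i * v) by ring.
  by rewrite f1 f2; ring.
have dn : x i * y j - x j * y i != 0 by rewrite subr_eq0.
move/eqP: hu; rewrite mulf_eq0 (negbTE dn) orbF /u mulf_eq0 gt_eqF //= subr_eq0 => /eqP ->.
move/eqP: hv; rewrite mulf_eq0 (negbTE dn) orbF /v mulf_eq0 gt_eqF //= subr_eq0 => /eqP ->.
by [].
Qed.

Lemma prodI_const (R : realType) n (x : 'I_n -> R) (i0 l0 : 'I_n) (S : {set 'I_n}) :
  (forall l, l != i0 -> x l = x l0) -> i0 \notin S -> prodI x S = x l0 ^+ #|S|.
Proof.
move=> h hS; rewrite /prodI -prodr_const; apply: eq_bigr => l lS; apply: h.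
by apply: contraNneq hS => <-.
Qed.

Arguments prodI_const {R n x i0 l0 S}.

Arguments lemL {R n k x y c}.

Lemma lemF (R : realType) (n k m a b : nat) (x y : 'I_n -> R) :
  (0 < a)%N -> (0 < b)%N ->
  (2 <= k)%N -> (k < m)%N -> (m <= n - 1)%N ->
  (a ^ m != b ^ k)%N ->
  (forall i, 0 < x i) -> (forall i, 0 < y i) ->
  (forall I : {set 'I_n}, #|I| = k -> prodI x I + prodI y I = 2 * a%:R) ->
  (forall J : {set 'I_n}, #|J| = m -> prodI x J + prodI y J = 2 * b%:R) ->
  forall i0 l0, (forall l, l != i0 -> x l = x l0 /\ y l = y l0) ->
  x i0 * y l0 != x l0 * y i0 -> False.
Proof.
move=> ha hb hk hkm hmn hab hx hy hI hJ i0 l0 hl hd.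
have hxl l : l != i0 -> x l = x l0 by move=> /hl [].
have hyl l : l != i0 -> y l = y l0 by move=> /hl [].
have cC : (n - 1 <= #|~: [set i0]|)%N by have := card_compl_le [set i0]; rewrite cards1.
have sub t : (t <= n - 1)%N -> exists S : {set 'I_n}, i0 \notin S /\ #|S| = t.
  move=> ht; have [S [sS cS]] := exists_sub t (~: [set i0]) (leq_trans ht cC).
  exists S; split => //; apply/negP => /(subsetP sS); by rewrite !inE eqxx.
case: k hk hkm hI hab sub => [|k'] // hk hkm hI hab sub.
case: m hkm hmn hJ hab sub => [|m'] // hkm hmn hJ hab sub.
have [S1 [iS1 cS1]] := sub k' ltac:(lia).
have [S2 [iS2 cS2]] := sub k'.+1 ltac:(lia).
have [T1 [iT1 cT1]] := sub m' ltac:(lia).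
have [T2 [iT2 cT2]] := sub m'.+1 ltac:(lia).
have e1 := hI _ (etrans (cardU1_notin _ _ iS1) (congr1 S cS1)).
have e2 := hI _ cS2.
have e3 := hJ _ (etrans (cardU1_notin _ _ iT1) (congr1 S cT1)).
have e4 := hJ _ cT2.
rewrite !prodIU1 // in e1 e3.
rewrite !(prodI_const hxl) // !(prodI_const hyl) // cS1 cS2 cT1 cT2 in e1 e2 e3 e4.
rewrite !exprS in e2 e4.
set X := x l0 in hd e1 e2 e3 e4 *; set Y := y l0 in hd e1 e2 e3 e4 *.
set u := x i0 in hd e1 e3 *; set v := y i0 in hd e1 e3 *.
have X0 : 0 < X by apply: hx.
have Y0 : 0 < Y by apply: hy.
set A := X ^+ k' in e1 e2; set B := Y ^+ k' in e1 e2.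
set C := X ^+ m' in e3 e4; set D := Y ^+ m' in e3 e4.
have A0 : 0 < A by apply: exprn_gt0.
have B0 : 0 < B by apply: exprn_gt0.
have g1 : A * (u - X) + B * (v - Y) = 0.
  have -> : A * (u - X) + B * (v - Y) = (u * A + v * B) - (X * A + Y * B) by ring.
  by rewrite e1 e2 subrr.
have g2 : C * (u - X) + D * (v - Y) = 0.
  have -> : C * (u - X) + D * (v - Y) = (u * C + v * D) - (X * C + Y * D) by ring.
  by rewrite e3 e4 subrr.
have g3 : (u - X) * (A * D - B * C) = 0.
  have -> : (u - X) * (A * D - B * C) = D * (A * (u - X) + B * (v - Y)) - B * (C * (u - X) + D * (v - Y)) by ring.
  by rewrite g1 g2; ring.
move/eqP: g3; rewrite mulf_eq0 => /orP[|].
  rewrite subr_eq0 => /eqP uX.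
  have vY : v = Y.
    move: g1; rewrite uX subrr mulr0 add0r => /eqP; rewrite mulf_eq0 gt_eqF //= subr_eq0.
    by move/eqP.
  by move: hd; rewrite uX vY eqxx.
rewrite subr_eq0 => /eqP hAD.
have dd : (m' = k' + (m' - k'))%N by lia.
have d0 : (0 < m' - k')%N by lia.
move: hAD; rewrite /C /D dd !exprD /A /B.
move=> hAD.
have XY : X = Y.
  have h1 : Y ^+ (m' - k') = X ^+ (m' - k').
    apply: (mulfI (x := X ^+ k' * Y ^+ k')).
      by rewrite mulf_neq0 // gt_eqF // exprn_gt0.
    transitivity (X ^+ k' * (Y ^+ k' * Y ^+ (m' - k'))); first by ring.
    by rewrite hAD; ring.
  by apply/eqP; rewrite -(eqrXn2 d0) ?ltW // h1.
rewrite -/A -/B in e1 e2.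
have ea : X ^+ k'.+1 = a%:R.
  move: e2; rewrite /A /B -XY exprS; lra.
have eb : X ^+ m'.+1 = b%:R.
  move: e4; rewrite /C /D -XY exprS; lra.
move: hab; apply/negP; rewrite negbK; rewrite -(eqr_nat R) !natrX -ea -eb -!exprM mulnC.
by [].
Qed.

Arguments lemF {R n k m a b x y}.

Lemma lemG (R : realType) (n k m a b : nat) (x y : 'I_n -> R) :
  (0 < a)%N -> (0 < b)%N ->
  (2 <= k)%N -> (k < m)%N -> (m <= n - 1)%N ->
  (a ^ m != b ^ k)%N ->
  (forall i, 0 < x i) -> (forall i, 0 < y i) ->
  (forall I : {set 'I_n}, #|I| = k -> prodI x I + prodI y I = 2 * a%:R) ->
  (forall J : {set 'I_n}, #|J| = m -> prodI x J + prodI y J = 2 * b%:R) ->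
  forall i j l0, l0 \notin [set i; j] -> x i * y j != x j * y i ->
  x i * y l0 != x l0 * y i -> False.
Proof.
move=> ha hb hk hkm hmn hab hx hy hI hJ i j l0 hl0 hd hd'.
have hn : (k + 2 <= n)%N by lia.
have L := lemL hk hn hx hy hI.
have hd0 := hd'.
apply: (lemF ha hb hk hkm hmn hab hx hy hI hJ i l0 _ hd') => l li.
have ij : i != j by apply: contraNneq hd => ->.
move: (hl0); rewrite !inE negb_or => /andP[l0i l0j].
have [lj|lj] := eqVneq l j.
  have [l2 hl2] : exists l2 : 'I_n, l2 \notin i |: (j |: [set l0]).
    apply: avoid; have h1 := cardU1_le i (j |: [set l0]).
    have h2 := cardU1_le j [set l0]; rewrite cards1 in h2.
    have h3 : (#|i |: (j |: [set l0])| <= 3)%N by apply: (leq_trans h1).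
    by apply: (leq_ltn_trans h3); lia.
  move: hl2; rewrite !inE !negb_or => /andP[l2i /andP[l2j l2l0]].
  have [e1 e2] := L i l0 j l2 ltac:(by rewrite !inE negb_or eq_sym ij eq_sym l0j)
    ltac:(by rewrite !inE negb_or l2i) hd0.
  have [e3 e4] := L i j l2 l0 ltac:(by rewrite !inE negb_or l2i) hl0 hd.
  by rewrite lj e1 e2 e3 e4.
by apply: L hl0 hd; rewrite !inE negb_or li.
Qed.

Arguments lemG {R n k m a b x y}.

Theorem lemma4p1 (R : realType) (n k m a b : nat) (x y : 'I_n -> R) :
  (0 < a)%N -> (0 < b)%N ->
  (2 <= k)%N -> (k < m)%N -> (m <= n - 1)%N ->
  (a ^ m != b ^ k)%N ->
  (forall i, 0 < x i) -> (forall i, 0 < y i) ->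
  (forall I : {set 'I_n}, #|I| = k -> prodI x I + prodI y I = 2 * a%:R) ->
  (forall J : {set 'I_n}, #|J| = m -> prodI x J + prodI y J = 2 * b%:R) ->
  exists c : R, 0 < c /\ forall i, x i / y i = c.
Proof.
move=> ha hb hk hkm hmn hab hx hy hI hJ.
have G := lemG ha hb hk hkm hmn hab hx hy hI hJ.
have [hall|] := boolP [forall i, forall j, x i * y j == x j * y i].
  have n0 : (0 < n)%N by lia.
  pose i00 := Ordinal n0.
  exists (x i00 / y i00); split; first by apply: divr_gt0.
  move=> i; apply/eqP; rewrite eqr_div; [|by rewrite gt_eqF|by rewrite gt_eqF].
  by move: hall => /forallP /(_ i) /forallP /(_ i00).
rewrite negb_forall => /existsP [i]; rewrite negb_forall => /existsP [j] hd.
have [l0 hl0] : exists l0 : 'I_n, l0 \notin [set i; j].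
  by apply: avoid; rewrite cards2; case: (i != j); lia.
have [e|ne] := eqVneq (x i * y l0) (x l0 * y i); last by case: (G i j l0 hl0 hd ne).
have ne' : x j * y l0 != x l0 * y j.
  apply/negP => /eqP e'; move/negP: hd; apply; apply/eqP.
  have p0 : x l0 * y l0 != 0 by rewrite mulf_neq0 // gt_eqF.
  apply: (mulIf p0).
  transitivity ((x i * y l0) * (x l0 * y j)); first by ring.
  by rewrite e -e'; ring.
have hd2 : x j * y i != x i * y j by rewrite eq_sym.
have hl0' : l0 \notin [set j; i] by rewrite setUC.
by case: (G j i l0 hl0' hd2 ne').
Qed.
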